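(* Let $\Gamma$ be a commutative topological group and let $(X,\Gamma)$ be a minimal, weakly mixing, metric, tame dynamical system. Then $X$ is a single point.
   Context: A dynamical system $(X,\Gamma)$: compact Hausdorff $X$ with continuous action of $\Gamma$; metric means $X$ metrizable. $E(X,\Gamma)$ is the pointwise closure in $X^X$ of $\{x\mapsto\gamma x\}$; $(X,\Gamma)$ is tame if $E(X,\Gamma)$ is separable and Fréchet (every point in the closure of a set is a limit of a sequence from it). Weakly mixing: the product system $(X\times X,\Gamma)$ with diagonal action is topologically transitive. *)

(* Defs.v *)
From HB Require Import structures.
From mathcomp Require Import all_boot all_order all_algebra.
From mathcomp Require Import all_classical all_reals all_analysis.
From mathcomp Require Import Rstruct Rstruct_topology.
From Stdlib Require Import Rdefinitions.

Set Implicit Arguments.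
Unset Strict Implicit.
Unset Printing Implicit Defensive.

Import Order.TTheory GRing.Theory Num.Theory.
Local Open Scope classical_set_scope.
Local Open Scope ring_scope.

Definition is_action (G : topologicalZmodType) (X : topologicalType)
  (act : G -> X -> X) : Prop :=
  [/\ forall x, act 0 x = x,
      forall g h x, act (g + h) x = act g (act h x) &
      continuous (fun p : G * X => act p.1 p.2)].

Definition metrizable (X : topologicalType) : Prop :=
  exists d : X -> X -> R,
    [/\ forall x y, (0 <= d x y)%R,
        forall x y, d x y = 0%R <-> x = y,
        forall x y, d x y = d y x,
        forall x y z, (d x z <= d x y + d y z)%R &
        forall A : set X,
          open A <-> (forall x, A x -> exists2 e : R, (0 < e)%R &
                        [set y | (d x y < e)%R] `<=` A)].

Definition minimal_system (G : topologicalZmodType) (X : topologicalType)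
  (act : G -> X -> X) : Prop :=
  forall A : set X, closed A -> (forall g x, A x -> A (act g x)) ->
    A = set0 \/ A = setT.

Definition top_transitive (G : topologicalZmodType) (Y : topologicalType)
  (act : G -> Y -> Y) : Prop :=
  forall U V : set Y, open U -> open V -> U !=set0 -> V !=set0 ->
    exists g : G, (act g @` U) `&` V !=set0.

Definition diag_act (G : topologicalZmodType) (X : topologicalType)
  (act : G -> X -> X) (g : G) (p : X * X) : X * X :=
  (act g p.1, act g p.2).

Definition weakly_mixing (G : topologicalZmodType) (X : topologicalType)
  (act : G -> X -> X) : Prop :=
  top_transitive (diag_act act).

Definition enveloping (G : topologicalZmodType) (X : topologicalType)
  (act : G -> X -> X) : set {ptws X -> X} :=
  closure (range (fun g : G => (act g : {ptws X -> X}))).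

Definition separable_set (T : topologicalType) (E : set T) : Prop :=
  exists2 D : set T, D `<=` E /\ countable D & E `<=` closure D.

Definition frechet_set (T : topologicalType) (E : set T) : Prop :=
  forall (A : set T) (f : T), A `<=` E -> E f -> closure A f ->
    exists u : nat -> T, (forall n, A (u n)) /\ u @ \oo --> f.

Definition tame (G : topologicalZmodType) (X : topologicalType)
  (act : G -> X -> X) : Prop :=
  separable_set (enveloping act) /\ frechet_set (enveloping act).

(* Main.v *)
Require Import Defs.
From mathcomp Require Import all_boot all_order all_algebra.
From mathcomp Require Import all_classical all_reals all_analysis.
From mathcomp Require Import Rstruct Rstruct_topology lra ring.
From Stdlib Require Import Rdefinitions.
Set Implicit Arguments.
Unset Strict Implicit.
Unset Printing Implicit Defensive.
Import Order.TTheory GRing.Theory Num.Theory.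
Local Open Scope classical_set_scope.
Local Open Scope ring_scope.
Section Nested.
Context (T : Type) (D : T -> T -> R).
Context (Dtri : forall x y z, D x z <= D x y + D y z) (Drefl : forall x, D x x = 0).
Context (Dcomp : forall (a : nat -> T) (r : nat -> R),
  (forall n m : nat, (leq n m) -> D (a n) (a m) <= r n) -> exists z, forall n, D (a n) z <= 2 * r n).

Lemma nested (S : nat -> T -> R -> Prop) (Inv : T -> R -> Prop) a0 r0 :
  0 < r0 -> Inv a0 r0 ->
  (forall n a r, 0 < r -> Inv a r -> exists a' r', [/\ 0 < r', Inv a' r',
      (forall w, D a' w <= r' -> D a w <= r) & S n a' r']) ->
  exists z, forall n, exists a r, S n a r /\ D a z <= 2 * r.
Proof.
move=> r0p I0 step.
have: forall nar : nat * (T * R), exists ar : T * R,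
   0 < nar.2.2 -> Inv nar.2.1 nar.2.2 -> [/\ 0 < ar.2, Inv ar.1 ar.2,
      (forall w, D ar.1 w <= ar.2 -> D nar.2.1 w <= nar.2.2) & S nar.1 ar.1 ar.2].
  move=> [n [a r]] /=.
  have [rp|rn] := boolP (0 < r); last by exists (a0, r0) => /negP.
  have [Ia|nIa] := pselect (Inv a r); last by exists (a0,r0).
  have [a' [r' H]] := step n a r rp Ia; by exists (a', r').
move=> /choice [f Hf].
pose ar := fix ar n := if n is n'.+1 then f (n', ar n') else (a0, r0).
have Hn : forall n, 0 < (ar n).2 /\ Inv (ar n).1 (ar n).2.
  elim=> [|n [IH1 IH2]] //=; have [] := Hf (n, ar n) IH1 IH2; by [].
have Hsub : forall n m, (leq n m) -> forall w, D (ar m).1 w <= (ar m).2 -> D (ar n).1 w <= (ar n).2.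
  move=> n m; elim: m => [|m IH]; first by rewrite leqn0 => /eqP ->.
  rewrite leq_eqVlt => /orP [/eqP -> //|nm w Hw].
  apply: IH => //; have [_ _ H _] := Hf (m, ar m) (Hn m).1 (Hn m).2; exact: H.
have Dc : forall n m : nat, leq n m -> D (ar n).1 (ar m).1 <= (ar n).2.
  move=> n m nm; apply: Hsub nm _ _; rewrite Drefl; exact: ltW (Hn m).1.
have [z Hz] := @Dcomp (fun n => (ar n).1) (fun n => (ar n).2) Dc.
exists z => n; exists (ar n.+1).1, (ar n.+1).2; split; last exact: Hz.
by have [] := Hf (n, ar n) (Hn n).1 (Hn n).2.
Qed.
End Nested.

Lemma small (e : R) : 0 < e -> exists k : nat, (k.+1%:R : R)^-1 < e.
Proof.
move=> ep; have ei : 0 <= e^-1 by rewrite invr_ge0 ltW.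
have := archi_boundP ei; set k := Num.Def.archi_bound _ => hk.
exists k; have q0 : (0:R) < k.+1%:R by rewrite ltr0n.
have h1 : e * e^-1 = 1 by rewrite mulfV // gt_eqF.
have h2 : (k.+1%:R : R) * (k.+1%:R)^-1 = 1 by rewrite mulfV // gt_eqF.
have h3 : (0:R) < (k.+1%:R)^-1 by rewrite invr_gt0.
have h4 : (k%:R : R) < k.+1%:R by rewrite ltr_nat.
have h5 : 1 < e * k.+1%:R by nra.
have h6 : 0 < (k.+1%:R)^-1 * (e * k.+1%:R - 1) by apply: mulr_gt0 => //; lra.
have h7 : (k.+1%:R : R)^-1 * (e * k.+1%:R - 1) = e - (k.+1%:R)^-1.
  by field; rewrite gt_eqF.
rewrite h7 subr_gt0 in h6; exact: h6.
Qed.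

Lemma minpos (a b : R) : 0 < a -> 0 < b -> exists c, [/\ 0 < c, c <= a & c <= b].
Proof.
move=> a0 b0; case: (leP a b) => ab; first by exists a.
by exists b; split => //; exact: ltW.
Qed.

Lemma invS_le (N n : nat) : leq N n -> ((n.+1)%:R : R)^-1 <= (N.+1%:R)^-1.
Proof. by move=> Nn; rewrite lef_pV2 ?posrE ?ltr0n // ler_nat ltnS. Qed.

Section Metric.
Context (X : topologicalType) (d : X -> X -> R).
Context (d0 : forall x y, 0 <= d x y) (dE : forall x y, d x y = 0 <-> x = y)
  (dsym : forall x y, d x y = d y x) (dtri : forall x y z, d x z <= d x y + d y z)
  (dopen : forall A : set X, open A <-> (forall x, A x -> exists2 e : R, 0 < e &
                        [set y | d x y < e] `<=` A)).

Lemma drefl x : d x x = 0. Proof. by apply/dE. Qed.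

Lemma ball_open c e : open [set y | d c y < e].
Proof.
apply/dopen => x /= cx; exists (e - d c x); first lra.
move=> y /= xy; have := dtri c x y; lra.
Qed.

Lemma nbhs_ballP z A : nbhs z A <-> exists2 e, 0 < e & [set y | d z y < e] `<=` A.
Proof.
rewrite nbhsE /=; split.
  move=> [B [oB Bz] BA]; have [e ep He] := (dopen B).1 oB z Bz.
  by exists e => // y /He /BA.
move=> [e ep He]; exists [set y | d z y < e] => //; split; first exact: ball_open.
by rewrite /= drefl.
Qed.

Lemma cvg_distP (u : nat -> X) z : u @ \oo --> z <->
  forall e, 0 < e -> exists N, forall n, leq N n -> d z (u n) < e.
Proof.
split.
  move=> H e ep; have : nbhs z [set y | d z y < e] by apply/nbhs_ballP; exists e.
  move=> /H [N _ HN]; exists N => n Nn; exact: HN.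
move=> H A /nbhs_ballP [e ep He]; have [N HN] := H e ep.
exists N => // n Nn; apply: He; exact: HN.
Qed.

Lemma cont_dist (f : X -> X) z : {for z, continuous f} ->
  forall e, 0 < e -> exists2 r, 0 < r & forall w, d z w < r -> d (f z) (f w) < e.
Proof.
move=> fc e ep.
have : nbhs (f z) [set y | d (f z) y < e] by apply/nbhs_ballP; exists e.
move=> /fc /nbhs_ballP [r rp Hr]; exists r => // w /Hr //.
Qed.

Lemma complete_of_compact : compact [set: X] ->
  forall (a : nat -> X) (r : nat -> R),
  (forall n m : nat, leq n m -> d (a n) (a m) <= r n) -> exists z, forall n, d (a n) z <= r n.
Proof.
move=> cX a r Har.
have [z [_ Hz]] := cX (a @ \oo) (fmap_proper_filter a eventually_filter) filterT.
exists z => n; apply/ler_addgt0Pr => e ep.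
have : (a @ \oo) (a @` [set m | leq n m]).
  by exists n => // m /= nm; exists m.
move=> /Hz Hz'.
have [] := Hz' [set y | d z y < e]; first by apply/nbhs_ballP; exists e.
move=> y [[m /= nm <-] /= zm].
have := Har n m nm; have := dtri (a n) (a m) z; rewrite (dsym z) in zm; lra.
Qed.

Lemma cluster_idx : compact [set: X] -> forall a : nat -> X,
  exists z, forall N e, 0 < e -> exists m, leq N m /\ d z (a m) < e.
Proof.
move=> cX a.
have [z [_ Hz]] := cX (a @ \oo) (fmap_proper_filter a eventually_filter) filterT.
exists z => N e ep.
have : (a @ \oo) (a @` [set m | leq N m]) by exists N => // m /= nm; exists m.
move=> /Hz Hz'.
have [] := Hz' [set y | d z y < e]; first by apply/nbhs_ballP; exists e.
by move=> y [[m /= nm <-] /= zm]; exists m.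
Qed.

Lemma net : compact [set: X] -> forall (x0 : X) e, 0 < e ->
  exists l : seq X, forall z, exists i, d (nth x0 l i) z < e.
Proof.
move=> cX x0 e ep; apply: contrapT => H.
have H' : forall l : seq X, exists z, forall i, e <= d (nth x0 l i) z.
  move=> l; apply: contrapT => nH; apply: H; exists l => z.
  apply: contrapT => nz; apply: nH; exists z => i; rewrite leNgt; apply/negP => lt.
  by apply: nz; exists i.
have [F HF] := choice H'.
pose L := fix L n := if n is n'.+1 then rcons (L n') (F (L n')) else [::].
pose a n := F (L n).
have sL : forall n, size (L n) = n by elim=> //= n IH; rewrite size_rcons IH.
have nL : forall n i : nat, (ltn i n) -> nth x0 (L n) i = a i.
  elim=> // n IH i; rewrite /ltn /= ltnS nth_rcons sL leq_eqVlt => /orP [/eqP ->|lt].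
    by rewrite ltnn eqxx.
  by rewrite lt IH.
have far : forall i n : nat, (ltn i n) -> e <= d (a i) (a n).
  by move=> i n lt; rewrite -(nL n i lt); exact: HF.
have [z Hz] := cluster_idx cX a.
have e2 : 0 < e / 2 by lra.
have [m1 [_ h1]] := Hz 0%N _ e2.
have [m2 [lt h2]] := Hz m1.+1 _ e2.
have := far m1 m2 lt; have := dtri (a m1) z (a m2); rewrite dsym in h1; lra.
Qed.


Context (G : topologicalZmodType) (act : G -> X -> X).
Context (act0 : forall x, act 0 x = x) (actD : forall g h x, act (g + h) x = act g (act h x))
  (actc : continuous (fun p : G * X => act p.1 p.2)).
Context (cX : compact [set: X]) (x0 : X).

Lemma actC g : continuous (act g).
Proof.
move=> z A /= HA.
have := @actc (g, z) A HA; rewrite /= => H; unfold nbhs in H; simpl in H; case: H => -[Q1 Q2] /= [h1 h2] sub.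
apply: filterS h2 => w Q2w; apply: (sub (g, w)); split => //; exact: nbhs_singleton h1.
Qed.

Lemma open_setX (U V : set X) : open U -> open V -> open (U `*` V).
Proof.
move=> oU oV; rewrite openE => -[u v] [/= Uu Vv].
exists (U, V) => //; split; [exact: open_nbhs_nbhs|exact: open_nbhs_nbhs].
Qed.


Context (wmX : weakly_mixing act).

Let D (p q : X * X) := d p.1 q.1 + d p.2 q.2.

Lemma dense_orbit : exists x y : X, forall z1 z2 e, 0 < e ->
  exists h, d z1 (act h x) < e /\ d z2 (act h y) < e.
Proof.
have Hnet : forall k : nat, exists l, forall z, exists i, d (nth x0 l i) z < (k.+1%:R)^-1.
  move=> k; apply: net => //; by rewrite invr_gt0 ltr0n.
have [N HN] := choice Hnet.
pose dec n := odflt (0, 0, 0)%N (unpickle n : option (nat * nat * nat)).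
pose c1 n := nth x0 (N (dec n).1.1) (dec n).1.2.
pose c2 n := nth x0 (N (dec n).1.1) (dec n).2.
pose rad n : R := ((dec n).1.1.+1%:R)^-1.
have radp : forall n, 0 < rad n by move=> n; rewrite invr_gt0 ltr0n.
pose S n (a : X * X) (r : R) := exists h, forall w : X * X, D a w <= 2 * r ->
   d (c1 n) (act h w.1) < rad n /\ d (c2 n) (act h w.2) < rad n.
have Dtri : forall p q s, D p s <= D p q + D q s.
  move=> p q s; rewrite /D; have := dtri p.1 q.1 s.1; have := dtri p.2 q.2 s.2; lra.
have Drefl : forall p, D p p = 0 by move=> p; rewrite /D !drefl addr0.
have Dcomp : forall (a : nat -> X * X) (r : nat -> R),
  (forall n m : nat, leq n m -> D (a n) (a m) <= r n) -> exists z, forall n, D (a n) z <= 2 * r n.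
  move=> a r Har.
  have H1 : forall n m : nat, leq n m -> d (a n).1 (a m).1 <= r n.
    move=> n m nm; have := d0 (a n).2 (a m).2; have := Har n m nm; rewrite /D; lra.
  have H2 : forall n m : nat, leq n m -> d (a n).2 (a m).2 <= r n.
    move=> n m nm; have := d0 (a n).1 (a m).1; have := Har n m nm; rewrite /D; lra.
  have [z1 Hz1] := @complete_of_compact cX (fun n => (a n).1) r H1.
  have [z2 Hz2] := @complete_of_compact cX (fun n => (a n).2) r H2.
  exists (z1, z2) => n; rewrite /D /=; have := Hz1 n; have := Hz2 n; lra.
have step : forall n a r, 0 < r -> (fun _ _ => True) a r -> exists a' r',
    [/\ 0 < r', (fun _ _ => True) a' r', (forall w, D a' w <= r' -> D a w <= r) & S n a' r'].
  move=> n [a1 a2] r rp _.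
  have r2 : 0 < r / 2 by lra.
  have oU := open_setX (ball_open a1 (r/2)) (ball_open a2 (r/2)).
  have oV := open_setX (ball_open (c1 n) (rad n)) (ball_open (c2 n) (rad n)).
  have neU : ([set y | d a1 y < r/2] `*` [set y | d a2 y < r/2]) !=set0.
    by exists (a1, a2); rewrite /= !drefl.
  have neV : ([set y | d (c1 n) y < rad n] `*` [set y | d (c2 n) y < rad n]) !=set0.
    by exists (c1 n, c2 n); rewrite /= !drefl; split; exact: radp.
  have [g [q [[[u v] [/= hu hv] <-] [/= q1 q2]]]] := wmX oU oV neU neV.
  have e1 : 0 < rad n - d (c1 n) (act g u) by lra.
  have e2 : 0 < rad n - d (c2 n) (act g v) by lra.
  have [de1 de1p Hd1] := @cont_dist (act g) u (@actC g u) _ e1.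
  have [de2 de2p Hd2] := @cont_dist (act g) v (@actC g v) _ e2.
  have de14 : 0 < de1 / 4 by lra.
  have de24 : 0 < de2 / 4 by lra.
  have [m1 [m1p m1a m1b]] := minpos de14 de24.
  have rr : 0 < r - (d a1 u + d a2 v) by lra.
  have [r' [r'p r'a r'b]] := minpos m1p rr.
  exists (u, v), r'; split => //.
    move=> w Hw; have := Dtri (a1, a2) (u, v) w; rewrite /D /= in Hw *; lra.
  exists g => w Hw; rewrite /D /= in Hw.
  have := d0 u w.1; have := d0 v w.2 => h01 h02.
  have := Hd1 w.1 ltac:(lra); have := Hd2 w.2 ltac:(lra) => k2 k1.
  have := dtri (c1 n) (act g u) (act g w.1); have := dtri (c2 n) (act g v) (act g w.2).
  lra.
have [[x y] Hz] := @nested (X * X) D Drefl Dcomp S (fun _ _ => True) (x0, x0) 1 ltr01 I step.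
exists x, y => z1 z2 e ep.
have e2p : 0 < e / 2 by lra.
have [k hk] := small e2p.
have [i1 hi1] := HN k z1; have [i2 hi2] := HN k z2.
have [a [r [[h Hh] Har]]] := Hz (pickle (k, i1, i2)).
have := Hh (x, y) Har; rewrite /c1 /c2 /rad /dec pickleK /= => -[k1 k2].
exists h; have := dtri z1 (nth x0 (N k) i1) (act h x); have := dtri z2 (nth x0 (N k) i2) (act h y).
rewrite !(dsym z1) !(dsym z2) => t1 t2.
set q := k.+1%:R^-1 in hk hi1 hi2 k1 k2 t1 t2 *; split; lra.
Qed.


Context (frX : frechet_set (enveloping act)).

Lemma ptws_nbhs (f : {ptws X -> X}) t e : 0 < e -> nbhs f [set g : {ptws X -> X} | d (f t) (g t) < e].
Proof.
move=> ep; have : nbhs (f t) [set y | d (f t) y < e] by apply/nbhs_ballP; exists e.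
move=> /(@proj_continuous X (fun _ => X) t f) H; exact: H.
Qed.

Lemma exists_p x y : (forall z1 z2 e, 0 < e ->
  exists h, d z1 (act h x) < e /\ d z2 (act h y) < e) ->
  exists (gs : nat -> G) (p : X -> X),
  (forall t e, 0 < e -> exists N, forall n, leq N n -> d (p t) (act (gs n) t) < e) /\ p x = p y.
Proof.
move=> Hxy.
have : forall n : nat, exists h, d x (act h x) < (n.+1%:R)^-1 /\ d x (act h y) < (n.+1%:R)^-1.
  move=> n; apply: Hxy; by rewrite invr_gt0 ltr0n.
move=> /choice [h Hh].
pose hs n := (act (h n) : {ptws X -> X}).
have cP : compact [set: {ptws X -> X}].
  have := @tychonoff X (fun _ => X) (fun _ => [set: X]) (fun _ => cX).
  congr compact; apply/seteqP; split => // f _.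
have [p [_ Hp]] := cP (hs @ \oo) (fmap_proper_filter hs eventually_filter) filterT.
have clos : closure (range hs) p.
  have Fr : (hs @ \oo) (range hs) by exists 0%N => // n _; exists n.
  by move=> B nB; apply: Hp.
have Eclos : enveloping act p.
  by apply: (closureS _ clos) => f [n _ <-]; exists (h n).
have AE : range hs `<=` enveloping act.
  by move=> f [n _ <-]; apply: subset_closure; exists (h n).
have [u [Au cu]] := frX AE Eclos clos.
have : forall n, exists g, u n = act g by move=> n; have [m _ <-] := Au n; exists (h m).
move=> /choice [gs Hgs].
have pxx : forall w, (forall n, d x (act (h n) w) < (n.+1%:R)^-1) -> p w = x.
  move=> w Hw; apply/dE; apply/le_anti; rewrite d0 andbT; apply/ler_addgt0Pr => e ep.
  rewrite add0r; have e2 : 0 < e / 2 by lra.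
  have [N HN] := small e2.
  have FN : (hs @ \oo) (hs @` [set n | leq N n]) by exists N => // n /= Nn; exists n.
  have [f [[n /= Nn <-] /= Hn]] := Hp _ _ FN (ptws_nbhs p w e2).
  have := Hw n; have := invS_le Nn; have := dtri (p w) (act (h n) w) x; rewrite (dsym (act (h n) w) x).
  set q1 := (n.+1%:R)^-1; set q2 := (N.+1%:R)^-1 in HN *; rewrite /hs in Hn; lra.
exists gs, p; split.
  move=> t e ep; have [N _ HN] := cu _ (ptws_nbhs p t ep).
  by exists N => n Nn; have := HN n Nn; rewrite /= Hgs.
rewrite (pxx x) ?(pxx y) // => n; have [] := Hh n; by [].
Qed.


Lemma dist0 a b : (forall e, 0 < e -> d a b < e) -> a = b.
Proof.
move=> H; apply/dE; apply/le_anti; rewrite d0 andbT; apply/ler_addgt0Pr => e ep.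
by rewrite add0r; apply: ltW; apply: H.
Qed.

Lemma Xcomp (a : nat -> X) (r : nat -> R) :
  (forall n m : nat, leq n m -> d (a n) (a m) <= r n) -> exists z, forall n, d (a n) z <= 2 * r n.
Proof.
move=> Har; have [z Hz] := @complete_of_compact cX a r Har.
exists z => n; have := Hz n; have := Har n n (leqnn n); rewrite drefl; lra.
Qed.

Section WithP.
Context (gs : nat -> G) (p : X -> X).
Context (conv : forall t e, 0 < e -> exists N, forall n, leq N n -> d (p t) (act (gs n) t) < e).

Lemma comm g z : p (act g z) = act g (p z).
Proof.
apply: dist0 => e ep; have e2 : 0 < e / 2 by lra.
have [N1 H1] := conv (act g z) e2.
have [de dep Hde] := @cont_dist (act g) (p z) (@actC g (p z)) _ e2.
have [N2 H2] := conv z dep.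
have k1 := H1 (maxn N1 N2) (leq_maxl _ _).
have k2 := Hde _ (H2 (maxn N1 N2) (leq_maxr _ _)).
rewrite dsym in k2.
rewrite -actD addrC actD in k1.
have := dtri (p (act g z)) (act g (act (gs (maxn N1 N2)) z)) (act g (p z)); lra.
Qed.


Definition Fset (eta : R) (N : nat) (w : X) :=
  forall m, leq N m -> d (act (gs m) w) (act (gs N) w) <= eta.

Lemma lim_le eta N w : Fset eta N w -> d (p w) (act (gs N) w) <= eta.
Proof.
move=> HF; apply/ler_addgt0Pr => e ep.
have [N1 H1] := conv w ep.
have k1 := H1 (maxn N N1) (leq_maxr _ _).
have k2 := HF (maxn N N1) (leq_maxl _ _).
have := dtri (p w) (act (gs (maxn N N1)) w) (act (gs N) w); lra.
Qed.

Lemma baire_F eta a r : 0 < eta -> 0 < r -> exists N a1 r1, [/\ 0 < r1,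
   (forall w, d a1 w <= r1 -> d a w <= r) & forall w, d a1 w <= r1 -> Fset eta N w].
Proof.
move=> etap rp; apply: contrapT => H.
pose S N b t := forall w, d b w <= 2 * t -> ~ Fset eta N w.
pose Inv b t := forall w, d b w <= t -> d a w <= r.
have step : forall N b t, 0 < t -> Inv b t -> exists b' t',
    [/\ 0 < t', Inv b' t', (forall w, d b' w <= t' -> d b w <= t) & S N b' t'].
  move=> N b t tp Ib.
  have [w0 [hw0 nF]] : exists w0, d b w0 <= t / 2 /\ ~ Fset eta N w0.
    apply: contrapT => nn; apply: H; exists N, b, (t / 2); split.
    - lra.
    - by move=> w hw; apply: Ib; lra.
    - move=> w hw; apply: contrapT => nf; apply: nn; exists w; split => //.
  have [m [Nm hm]] : exists m, leq N m /\ eta < d (act (gs m) w0) (act (gs N) w0).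
    apply: contrapT => nn; apply: nF => m Nm; rewrite leNgt; apply/negP => lt.
    by apply: nn; exists m.
  set kap := d (act (gs m) w0) (act (gs N) w0) - eta.
  have k2 : 0 < kap / 2 by rewrite /kap; lra.
  have [d1 d1p Hd1] := @cont_dist (act (gs m)) w0 (@actC (gs m) w0) _ k2.
  have [d2 d2p Hd2] := @cont_dist (act (gs N)) w0 (@actC (gs N) w0) _ k2.
  have d14 : 0 < d1 / 4 by lra.
  have d24 : 0 < d2 / 4 by lra.
  have t4 : 0 < t / 4 by lra.
  have [m1 [m1p m1a m1b]] := minpos d14 d24.
  have [t' [t'p t'a t'b]] := minpos m1p t4.
  have incl : forall w, d w0 w <= t' -> d b w <= t.
    by move=> w hw; have := dtri b w0 w; lra.
  exists w0, t'; split => //.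
    by move=> w /incl /Ib.
  move=> w hw HF; have := HF m Nm.
  have := Hd1 w ltac:(lra); have := Hd2 w ltac:(lra).
  have := dtri (act (gs m) w0) (act (gs m) w) (act (gs N) w0).
  have := dtri (act (gs m) w) (act (gs N) w) (act (gs N) w0).
  rewrite (dsym (act (gs N) w0) (act (gs N) w)) /kap; lra.
have Ia : Inv a r by [].
have [z Hz] := @nested X d drefl Xcomp S Inv a r rp Ia step.
have eta2 : 0 < eta / 2 by lra.
have [N0 HN0] := conv z eta2.
have [b [t [Sb bz]]] := Hz N0; apply: (Sb z bz) => m Nm.
have := HN0 m Nm; have := HN0 N0 (leqnn N0).
have := dtri (act (gs m) z) (p z) (act (gs N0) z); rewrite (dsym _ (p z)); lra.
Qed.


Lemma osc_small eps a r : 0 < eps -> 0 < r -> exists a' r', [/\ 0 < r',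
   (forall w, d a' w <= r' -> d a w <= r) &
   forall w w', d a' w <= 3 * r' -> d a' w' <= 3 * r' -> d (p w) (p w') <= eps].
Proof.
move=> epsp rp; have eta : 0 < eps / 4 by lra.
have [N [a1 [r1 [r1p incl HF]]]] := baire_F a eta rp.
have [de dep Hde] := @cont_dist (act (gs N)) a1 (@actC (gs N) a1) _ eta.
have r13 : 0 < r1 / 3 by lra.
have de4 : 0 < de / 4 by lra.
have [r' [r'p r'a r'b]] := minpos r13 de4.
exists a1, r'; split => //.
  by move=> w hw; apply: incl; lra.
move=> w w' hw hw'.
have l1 := lim_le (HF w ltac:(lra)).
have l2 := lim_le (HF w' ltac:(lra)).
have c1 := Hde w ltac:(lra); have c2 := Hde w' ltac:(lra).
have := dtri (p w) (act (gs N) w) (p w').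
have := dtri (act (gs N) w) (act (gs N) a1) (p w').
have := dtri (act (gs N) a1) (act (gs N) w') (p w').
rewrite (dsym (act (gs N) w) (act (gs N) a1)) (dsym (act (gs N) w') (p w')); lra.
Qed.

Lemma cont_point : exists c0, forall e, 0 < e ->
  exists2 de, 0 < de & forall w, d c0 w < de -> d (p c0) (p w) < e.
Proof.
pose S (k : nat) b t := 0 < t /\ forall w w', d b w <= 3 * t -> d b w' <= 3 * t ->
   d (p w) (p w') <= (k.+1%:R)^-1.
have step : forall k b t, 0 < t -> (fun _ _ => True) b t -> exists b' t',
    [/\ 0 < t', (fun _ _ => True) b' t', (forall w, d b' w <= t' -> d b w <= t) & S k b' t'].
  move=> k b t tp _; have kp : 0 < (k.+1%:R : R)^-1 by rewrite invr_gt0 ltr0n.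
  have [b' [t' [t'p incl Hosc]]] := osc_small b kp tp.
  by exists b', t'; split.
have [c0 Hc] := @nested X d drefl Xcomp S (fun _ _ => True) x0 1 ltr01 I step.
exists c0 => e ep; have [k hk] := small ep.
have [b [t [[tp Hb] bc]]] := Hc k.
exists t => // w hw; have := Hb c0 w ltac:(lra) ltac:(have := dtri b c0 w; lra).
set q := (k.+1%:R)^-1 in hk *; lra.
Qed.


Lemma fixed x y : (forall z1 z2 e, 0 < e ->
  exists h, d z1 (act h x) < e /\ d z2 (act h y) < e) -> p x = p y ->
  exists c, forall g, act g c = c.
Proof.
move=> Hxy pxy; have [c0 Hc0] := cont_point.
exists (p c0) => g; rewrite -comm; apply: dist0 => e ep.
have e2 : 0 < e / 2 by lra.
have [d1 d1p H1] := Hc0 _ e2.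
have [da dap Ha] := @cont_dist (act g) (p c0) (@actC g (p c0)) _ e2.
have [db dbp Hb] := Hc0 _ dap.
have [dc dcp Hc] := @cont_dist (act (- g)) (act g c0) (@actC (- g) (act g c0)) _ dbp.
have cgc : forall w, d (act g c0) w < dc -> d (p (act g c0)) (p w) < e / 2.
  move=> w hw; have := Hc w hw; rewrite -actD addNr act0 => /Hb /Ha.
  by rewrite !comm -actD subrr act0.
have [m [mp m1 m2]] := minpos d1p dcp.
have [h [hx hy]] := Hxy c0 (act g c0) m mp.
have k1 := H1 _ (ltac:(lra) : d c0 (act h x) < d1).
have k2 := cgc _ (ltac:(lra) : d (act g c0) (act h y) < dc).
rewrite comm pxy -comm in k1.
have := dtri (p c0) (p (act h y)) (p (act g c0)); rewrite (dsym (p (act h y))) => t; rewrite dsym; lra.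
Qed.

End WithP.


Lemma final_fixed : exists c, forall g, act g c = c.
Proof.
have [x [y H]] := dense_orbit.
have [gs [p [conv pxy]]] := exists_p H.
exact: (fixed conv H pxy).
Qed.

End Metric.


Theorem mainTheorem8 (G : topologicalZmodType) (X : topologicalType)
  (act : G -> X -> X) :
  compact [set: X] -> hausdorff_space X -> metrizable X ->
  [set: X] !=set0 ->
  is_action act -> minimal_system act -> weakly_mixing act -> tame act ->
  exists x : X, forall y : X, y = x.
Proof.
move=> cX _ [d [d0' dE' dsym dtri' dopen']] [x0 _] [act0 actD actc] minX wmX [_ frX].
have d0 : forall x y, 0 <= d x y by move=> x y; apply/RleP; exact: d0'.
have dE : forall x y, d x y = 0 <-> x = y by exact: dE'.
have dtri : forall x y z, d x z <= d x y + d y z by move=> x y z; apply/RleP; exact: dtri'.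
have dopen : forall A : set X, open A <-> (forall x, A x -> exists2 e : R, 0 < e &
                        [set y | d x y < e] `<=` A).
  move=> A; rewrite dopen'; split => H x Ax; have [e ep He] := H x Ax; exists e.
  - by apply/RltP.
  - by move=> y /= /RltP; apply: He.
  - by apply/RltP.
  - by move=> y /= /RltP; apply: He.
have [c Hc] := final_fixed d0 dE dsym dtri dopen act0 actD actc cX x0 wmX frX.
have cl : closed [set c].
  rewrite -(setCK [set c]); apply: open_closedC; apply/dopen => w /= wc.
  exists (d c w); first by rewrite lt_def d0 andbT; apply/eqP => /dE /esym.
  by move=> z /= hz zc; rewrite zc dsym in hz; rewrite ltxx in hz.
have [E0|ET] := minX [set c] cl (fun g x xc => ltac:(by rewrite /= xc Hc)).
  by have : [set c] c by []; rewrite E0.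
by exists c => y; have : [set: X] y by []; rewrite -ET.
Qed.
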